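(* Suppose Assumption 1 holds. Let $\mathbf{x}^*\in\mathcal{X}_0$ satisfy $\mathbf{g}(\mathbf{x}^* )\le\mathbf{0}$ (componentwise). Let $\gamma>0$ and $\eta>0$ be arbitrary and suppose $\alpha\ge\frac12(\gamma^2\beta^2+\eta)$ in Algorithm 1. Then for all $t\ge1$, $$\Delta(t+1)+f^t(\mathbf{x}(t))\le f^t(\mathbf{x}^* )+\alpha\big[\|\mathbf{x}^*-\mathbf{x}(t)\|^2-\|\mathbf{x}^*-\mathbf{x}(t+1)\|^2\big]+\tfrac12\big[\|\tilde{\mathbf{g}}(\mathbf{x}(t+1))\|^2-\|\tilde{\mathbf{g}}(\mathbf{x}(t))\|^2\big]+\frac{D^2}{2\eta}.$$
   Context: Setting: $n,m$ positive integers; $\mathcal{X}_0\subset\mathbb{R}^n$ is a nonempty compact convex set; $\mathbf{g}=(g_1,\ldots,g_m)^{\mathsf T}:\mathbb{R}^n\to\mathbb{R}^m$ with each $g_k$ convex and continuous; $f^t$, $t=0,1,2,\ldots$, are convex differentiable real functions on (a neighborhood of) $\mathcal{X}_0$. All norms are Euclidean. Assumption 1: there are constants $D,\beta,G,R>0$ with $\|\nabla f^t(\mathbf{x})\|\le D$ for all $\mathbf{x}\in\mathcal{X}_0$ and all $t\ge0$; $\|\mathbf{g}(\mathbf{x})-\mathbf{g}(\mathbf{y})\|\le\beta\|\mathbf{x}-\mathbf{y}\|$ for all $\mathbf{x},\mathbf{y}\in\mathcal{X}_0$; $\|\mathbf{g}(\mathbf{x})\|\le G$ for all $\mathbf{x}\in\mathcal{X}_0$;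 $\|\mathbf{x}-\mathbf{y}\|\le R$ for all $\mathbf{x},\mathbf{y}\in\mathcal{X}_0$. Algorithm 1 (parameters $\gamma>0,\alpha>0$): let $\tilde{\mathbf{g}}(\mathbf{x})=\gamma\mathbf{g}(\mathbf{x})$. Choose any $\mathbf{x}(0)\in\mathcal{X}_0$ and set $Q_k(0)=0$ for all $k$. For each $t=0,1,2,\ldots$: set $Q_k(t+1)=\max\{-\tilde g_k(\mathbf{x}(t)),\,Q_k(t)+\tilde g_k(\mathbf{x}(t))\}$ for $k=1,\ldots,m$, and let $\mathbf{x}(t+1)$ be a minimizer over $\mathbf{x}\in\mathcal{X}_0$ of $[\nabla f^t(\mathbf{x}(t))]^{\mathsf T}(\mathbf{x}-\mathbf{x}(t))+[\mathbf{Q}(t+1)+\tilde{\mathbf{g}}(\mathbf{x}(t))]^{\mathsf T}\tilde{\mathbf{g}}(\mathbf{x})+\alpha\|\mathbf{x}-\mathbf{x}(t)\|^2$, where $\mathbf{Q}(t)=(Q_1(t),\ldots,Q_m(t))^{\mathsf T}$. Lyapunov function and drift: $L(t)=\tfrac12\|\mathbf{Q}(t)\|^2$ and $\Delta(t)=L(t+1)-L(t)$. *)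

(* Defs.v *)
(* Stdlib Reals.  Vectors of R^n are represented as functions
   nat -> R of which only the coordinates 0..n-1 are used. *)
From Stdlib Require Import Reals Lra Lia.
Open Scope R_scope.

Definition vec := nat -> R.

Fixpoint rsum (n : nat) (f : nat -> R) : R :=
  match n with
  | O => 0
  | S k => rsum k f + f k
  end.

Definition dot (n : nat) (u v : vec) : R := rsum n (fun i => u i * v i).
Definition norm (n : nat) (u : vec) : R := sqrt (dot n u u).

Definition vadd (u v : vec) : vec := fun i => u i + v i.
Definition vsub (u v : vec) : vec := fun i => u i - v i.
Definition vscale (a : R) (u : vec) : vec := fun i => a * u i.

Definition Rn_convex_set (A : vec -> Prop) : Prop :=
  forall x y l, A x -> A y -> 0 <= l <= 1 ->
    A (vadd (vscale l x) (vscale (1 - l) y)).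

Definition Rn_open_set (n : nat) (A : vec -> Prop) : Prop :=
  forall x, A x -> exists r, 0 < r /\ forall y, norm n (vsub y x) < r -> A y.

Definition Rn_seq_converges (n : nat) (u : nat -> vec) (l : vec) : Prop :=
  forall eps, 0 < eps -> exists N, forall k, (N <= k)%nat -> norm n (vsub (u k) l) < eps.

Definition Rn_compact_set (n : nat) (A : vec -> Prop) : Prop :=
  forall u : nat -> vec, (forall k, A (u k)) ->
    exists (phi : nat -> nat) (l : vec),
      (forall k, (phi k < phi (S k))%nat) /\ A l /\ Rn_seq_converges n (fun k => u (phi k)) l.

Definition Rn_convex_on (A : vec -> Prop) (f : vec -> R) : Prop :=
  forall x y l, A x -> A y -> 0 <= l <= 1 ->
    f (vadd (vscale l x) (vscale (1 - l) y)) <= l * f x + (1 - l) * f y.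

Definition Rn_continuous_fun (n : nat) (f : vec -> R) : Prop :=
  forall x eps, 0 < eps -> exists delta, 0 < delta /\
    forall y, norm n (vsub y x) < delta -> Rabs (f y - f x) < eps.

Definition Rn_has_gradient (n : nat) (f : vec -> R) (x d : vec) : Prop :=
  forall eps, 0 < eps -> exists delta, 0 < delta /\
    forall y, norm n (vsub y x) < delta ->
      Rabs (f y - f x - dot n d (vsub y x)) <= eps * norm n (vsub y x).

(* Main.v *)
Require Import Defs.
From Stdlib Require Import Reals Lra Lia Psatz.
Open Scope R_scope.


Definition comb (l : R) (a b : vec) : vec := vadd (vscale l a) (vscale (1 - l) b).

Lemma rsum_le n f g : (forall i, (i<n)%nat -> f i <= g i) -> rsum n f <= rsum n g.
Proof.
  induction n; simpl; intros H; [lra|].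
  apply Rplus_le_compat; [apply IHn; intros; apply H; lia | apply H; lia].
Qed.

Lemma dot_ge0 n u : 0 <= dot n u u.
Proof. unfold dot; induction n; simpl; [lra| pose proof (Rle_0_sqr (u n)); unfold Rsqr in *; lra]. Qed.

Lemma norm_sq n u : norm n u ^ 2 = dot n u u.
Proof. unfold norm; simpl; rewrite Rmult_1_r; apply sqrt_sqrt, dot_ge0. Qed.

Lemma norm_ge0 n u : 0 <= norm n u.
Proof. apply sqrt_pos. Qed.

Lemma L1 n d l a b c :
  dot n d (vsub (comb l a b) c) = l * dot n d (vsub a c) + (1-l) * dot n d (vsub b c).
Proof. unfold dot, comb, vsub, vadd, vscale; induction n; simpl; [ring| rewrite IHn; ring]. Qed.

Lemma L2 n l a b c :
  dot n (vsub (comb l a b) c) (vsub (comb l a b) c) =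
  dot n (vsub b c) (vsub b c) + 2 * l * dot n (vsub b c) (vsub a b)
  + l ^ 2 * dot n (vsub a b) (vsub a b).
Proof. unfold dot, comb, vsub, vadd, vscale; induction n; simpl; [ring| rewrite IHn; ring]. Qed.

Lemma L3 n a b c :
  2 * dot n (vsub b c) (vsub a b) =
  dot n (vsub a c) (vsub a c) - dot n (vsub b c) (vsub b c) - dot n (vsub a b) (vsub a b).
Proof. unfold dot, vsub; induction n; simpl; [ring| rewrite Rmult_plus_distr_l, IHn; ring]. Qed.

Lemma L4 n d v e : 0 < e ->
  - dot n d v <= dot n d d * / (2 * e) + e / 2 * dot n v v.
Proof.
  intros He.
  assert (Hid : dot n d d * / (2 * e) + dot n d v + e / 2 * dot n v v
     = / (2 * e) * rsum n (fun i => (d i + e * v i) * (d i + e * v i))).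
  { unfold dot; induction n; simpl; [field; lra | rewrite (Rmult_plus_distr_l (/(2*e))), <- IHn; field; lra]. }
  assert (0 <= rsum n (fun i => (d i + e * v i) * (d i + e * v i))).
  { clear Hid; induction n; simpl; [lra| pose proof (Rle_0_sqr (d n + e*v n)); unfold Rsqr in *; lra]. }
  assert (0 <= / (2 * e)) by (left; apply Rinv_0_lt_compat; lra).
  nra.
Qed.

Lemma drift m Q1 Q2 A B gam :
  (forall k, (k<m)%nat -> Q2 k = Rmax (-(gam*B k)) (Q1 k + gam*B k)) ->
  / 2 * dot m Q2 Q2 - / 2 * dot m Q1 Q1 <=
  dot m (vadd Q1 (vscale gam A)) (vscale gam B)
  + / 2 * dot m (vscale gam B) (vscale gam B) - / 2 * dot m (vscale gam A) (vscale gam A)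
  + / 2 * gam ^ 2 * dot m (vsub B A) (vsub B A).
Proof.
  unfold dot, vadd, vscale, vsub; induction m; simpl; intros H; [lra|].
  specialize (IHm (fun k Hk => H k ltac:(lia))).
  assert (Hq := H m ltac:(lia)).
  assert (P : / 2 * (Q2 m * Q2 m) - / 2 * (Q1 m * Q1 m) <=
     (Q1 m + gam * A m) * (gam * B m) + / 2 * (gam * B m * (gam * B m))
     - / 2 * (gam * A m * (gam * A m)) + / 2 * gam ^ 2 * ((B m - A m) * (B m - A m))).
  { replace ((Q1 m + gam * A m) * (gam * B m) + / 2 * (gam * B m * (gam * B m))
     - / 2 * (gam * A m * (gam * A m)) + / 2 * gam ^ 2 * ((B m - A m) * (B m - A m)))
     with (Q1 m * (gam * B m) + (gam * B m) * (gam * B m)) by field.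
    rewrite Hq; unfold Rmax; destruct Rle_dec.
    - pose proof (Rle_0_sqr (gam * B m)); unfold Rsqr in *; nra.
    - pose proof (Rle_0_sqr (Q1 m + gam * B m)); unfold Rsqr in *; nra. }
  lra.
Qed.

Lemma dot_conv_le m w a b c l gam :
  (forall k, (k<m)%nat -> 0 <= w k) -> 0 < gam ->
  (forall k, (k<m)%nat -> c k <= l * a k + (1 - l) * b k) ->
  dot m w (vscale gam c) <= l * dot m w (vscale gam a) + (1-l) * dot m w (vscale gam b).
Proof.
  unfold dot, vscale; induction m; simpl; intros Hw Hg Hc; [lra|].
  specialize (IHm (fun k Hk => Hw k ltac:(lia)) Hg (fun k Hk => Hc k ltac:(lia))).
  assert (Hw' := Hw m ltac:(lia)). assert (Hc' := Hc m ltac:(lia)).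
  assert (w m * (gam * c m) <= w m * (gam * (l * a m + (1 - l) * b m))).
  { apply Rmult_le_compat_l; auto. apply Rmult_le_compat_l; lra. }
  nra.
Qed.

Lemma dot_nonpos m w c gam :
  (forall k, (k<m)%nat -> 0 <= w k) -> 0 < gam ->
  (forall k, (k<m)%nat -> c k <= 0) -> dot m w (vscale gam c) <= 0.
Proof.
  unfold dot, vscale; induction m; simpl; intros Hw Hg Hc; [lra|].
  specialize (IHm (fun k Hk => Hw k ltac:(lia)) Hg (fun k Hk => Hc k ltac:(lia))).
  assert (Hw' := Hw m ltac:(lia)). assert (Hc' := Hc m ltac:(lia)).
  assert (w m * (gam * c m) <= 0).
  { assert (0 <= w m * (gam * - c m)) by (apply Rmult_le_pos; nra). nra. }
  lra.
Qed.

Lemma L5 n l a b :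
  dot n (vsub (comb l a b) b) (vsub (comb l a b) b) = l ^ 2 * dot n (vsub a b) (vsub a b).
Proof. unfold dot, comb, vsub, vadd, vscale; induction n; simpl; [ring| rewrite IHn; ring]. Qed.

Lemma L6 n d l a b :
  dot n d (vsub (comb l a b) b) = l * dot n d (vsub a b).
Proof. unfold dot, comb, vsub, vadd, vscale; induction n; simpl; [ring| rewrite IHn; ring]. Qed.

Lemma norm_comb n l a b : 0 <= l ->
  norm n (vsub (comb l a b) b) = l * norm n (vsub a b).
Proof.
  intros Hl; unfold norm at 1; rewrite L5, sqrt_mult_alt by (apply pow2_ge_0).
  rewrite sqrt_pow2 by lra; reflexivity.
Qed.

Lemma lim_l A B : (forall l, 0 < l <= 1 -> 0 <= A + B * l) -> 0 <= B -> 0 <= A.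
Proof.
  intros H HB. destruct (Rle_lt_dec 0 A) as [h|h]; auto.
  set (l := - A / (B - A)).
  assert (Hl : 0 < l <= 1).
  { unfold l; split.
    - apply Rdiv_lt_0_compat; lra.
    - apply Rmult_le_reg_r with (B - A); [lra|]. unfold Rdiv; rewrite Rmult_assoc, Rinv_l; lra. }
  specialize (H l Hl).
  assert (E : A + B * l = - (A*A) / (B - A)) by (unfold l; field; lra).
  rewrite E in H.
  assert (0 < A * A / (B - A)) by (apply Rdiv_lt_0_compat; nra).
  unfold Rdiv in *; lra.
Qed.

Lemma lim_eps c e N : (forall eps, 0 < eps -> c <= e + eps * N) -> 0 <= N -> c <= e.
Proof.
  intros H HN. destruct (Rle_lt_dec c e) as [h|h]; auto.
  set (eps := (c - e) / (2 * (N + 1))).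
  assert (Hp : 0 < eps) by (apply Rdiv_lt_0_compat; lra).
  specialize (H eps Hp).
  assert (eps * N < c - e).
  { unfold eps. apply Rle_lt_trans with ((c - e) / 2).
    - apply Rmult_le_reg_r with (2 * (N + 1)); [lra|].
      unfold Rdiv. field_simplify; [nra | lra].
    - lra. }
  lra.
Qed.

Lemma grad_ineq n U f x y d :
  Rn_convex_on U f -> U x -> U y -> Rn_has_gradient n f x d ->
  f x + dot n d (vsub y x) <= f y.
Proof.
  intros Hc Hx Hy Hg.
  set (N := norm n (vsub y x)).
  assert (HN : 0 <= N) by apply norm_ge0.
  enough (dot n d (vsub y x) <= f y - f x) by lra.
  apply (lim_eps _ _ N); auto.
  intros eps He. destruct (Hg eps He) as [del [Hd Hdel]].
  set (l := del / (del + N + 1)).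
  assert (Hl0 : 0 < l) by (apply Rdiv_lt_0_compat; lra).
  assert (Hl1 : l <= 1).
  { apply Rmult_le_reg_r with (del + N + 1); [lra|]. unfold l, Rdiv.
    rewrite Rmult_assoc, Rinv_l; lra. }
  assert (HlN : l * N < del).
  { unfold l, Rdiv. apply Rmult_lt_reg_r with (del + N + 1); [lra|].
    replace (del * / (del + N + 1) * N * (del + N + 1)) with (del * N) by (field; lra). nra. }
  specialize (Hdel (comb l y x)).
  rewrite norm_comb in Hdel by lra. fold N in Hdel.
  specialize (Hdel HlN). rewrite L6 in Hdel.
  assert (Hcv := Hc y x l Hy Hx ltac:(lra)). fold (comb l y x) in Hcv.
  assert (Hb : - (eps * (l * N)) <= f (comb l y x) - f x - l * dot n d (vsub y x)).
  { pose proof (Rle_abs (- (f (comb l y x) - f x - l * dot n d (vsub y x)))) as Ha.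
    rewrite Rabs_Ropp in Ha. lra. }
  assert (l * (dot n d (vsub y x)) <= l * (f y - f x + eps * N)) by nra.
  apply Rmult_le_reg_l with l; lra.
Qed.

Theorem lemma8
  (n m : nat) (Hn : (0 < n)%nat) (Hm : (0 < m)%nat)
  (X0 : vec -> Prop)
  (HX0ne : exists x, X0 x) (HX0c : Rn_compact_set n X0) (HX0cv : Rn_convex_set X0)
  (g : vec -> vec)
  (Hgconv : forall k, (k < m)%nat -> Rn_convex_on (fun _ => True) (fun x => g x k))
  (Hgcont : forall k, (k < m)%nat -> Rn_continuous_fun n (fun x => g x k))
  (f : nat -> vec -> R) (df : nat -> vec -> vec)
  (Hf : forall t, exists U : vec -> Prop,
      Rn_open_set n U /\ Rn_convex_set U /\ (forall x, X0 x -> U x) /\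
      Rn_convex_on U (f t) /\ (forall x, U x -> Rn_has_gradient n (f t) x (df t x)))
  (D beta G Rd : R) (HD : 0 < D) (Hbeta : 0 < beta) (HG : 0 < G) (HR : 0 < Rd)
  (HdfD : forall t x, X0 x -> norm n (df t x) <= D)
  (Hlip : forall x y, X0 x -> X0 y -> norm m (vsub (g x) (g y)) <= beta * norm n (vsub x y))
  (HgG : forall x, X0 x -> norm m (g x) <= G)
  (Hdiam : forall x y, X0 x -> X0 y -> norm n (vsub x y) <= Rd)
  (gamma alpha eta : R) (Hgamma : 0 < gamma) (Halpha : 0 < alpha) (Heta : 0 < eta)
  (Halpha_ge : alpha >= / 2 * (gamma ^ 2 * beta ^ 2 + eta))
  (x : nat -> vec) (Q : nat -> vec)
  (Hx0 : X0 (x 0%nat))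
  (HQ0 : forall k, (k < m)%nat -> Q 0%nat k = 0)
  (HQ : forall t k, (k < m)%nat ->
      Q (S t) k = Rmax (- (gamma * g (x t) k)) (Q t k + gamma * g (x t) k))
  (Hxmin : forall t, X0 (x (S t)) /\
      forall y, X0 y ->
        dot n (df t (x t)) (vsub (x (S t)) (x t))
        + dot m (vadd (Q (S t)) (vscale gamma (g (x t)))) (vscale gamma (g (x (S t))))
        + alpha * norm n (vsub (x (S t)) (x t)) ^ 2
        <=
        dot n (df t (x t)) (vsub y (x t))
        + dot m (vadd (Q (S t)) (vscale gamma (g (x t)))) (vscale gamma (g y))
        + alpha * norm n (vsub y (x t)) ^ 2)
  (xs : vec) (Hxs : X0 xs) (Hgxs : forall k, (k < m)%nat -> g xs k <= 0) :
  let L := fun t => / 2 * norm m (Q t) ^ 2 in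
  let Delta := fun t => L (S t) - L t in
  forall t, (1 <= t)%nat ->
    Delta (S t) + f t (x t)
    <= f t xs
       + alpha * (norm n (vsub xs (x t)) ^ 2 - norm n (vsub xs (x (S t))) ^ 2)
       + / 2 * (norm m (vscale gamma (g (x (S t)))) ^ 2 - norm m (vscale gamma (g (x t))) ^ 2)
       + D ^ 2 / (2 * eta).
Proof.
  intros L Delta t Ht.
  destruct t as [|t0]; [lia|].
  set (t := S t0) in *.
  assert (Hxt : X0 (x t)) by (unfold t; apply (Hxmin t0)).
  destruct (Hxmin t) as [Hz Hmin].
  set (xt := x t) in *. set (z := x (S t)) in *.
  set (d := df t xt) in *.
  set (w := vadd (Q (S t)) (vscale gamma (g xt))) in *.
  assert (Hw : forall k, (k < m)%nat -> 0 <= w k).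
  { intros k Hk. unfold w, vadd, vscale. pose proof (HQ t k Hk) as E; fold xt in E; rewrite E.
    pose proof (Rmax_l (- (gamma * g xt k)) (Q t k + gamma * g xt k)). lra. }
  set (h := fun y => dot n d (vsub y xt) + dot m w (vscale gamma (g y))).
  (* strong convexity *)
  assert (Hsc : h z <= h xs + alpha * (2 * dot n (vsub z xt) (vsub xs z))).
  { set (A := h xs - h z + alpha * (2 * dot n (vsub z xt) (vsub xs z))).
    set (B := alpha * dot n (vsub xs z) (vsub xs z)).
    enough (0 <= A) by (unfold A in *; lra).
    apply (lim_l A B); [| unfold B; pose proof (dot_ge0 n (vsub xs z)); nra].
    intros l Hl.
    assert (Hy : X0 (comb l xs z)) by (apply HX0cv; auto; lra).
    specialize (Hmin _ Hy).
    rewrite !norm_sq in Hmin. rewrite L1, L2 in Hmin.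
    assert (Hc : dot m w (vscale gamma (g (comb l xs z))) <=
       l * dot m w (vscale gamma (g xs)) + (1 - l) * dot m w (vscale gamma (g z))).
    { apply dot_conv_le; auto. intros k Hk. apply (Hgconv k Hk xs z l); auto; lra. }
    assert (E : dot n d (vsub xs xt) * l + dot n d (vsub z xt) * (1-l) = l * dot n d (vsub xs xt) + (1 - l) * dot n d (vsub z xt)) by ring.
    assert (Hl2 : 0 <= l * (A + B * l)).
    { unfold A, B, h; cbv beta. lra. }
    apply Rmult_le_reg_l with l; lra. }
  rewrite L3 in Hsc.
  assert (Hwxs : dot m w (vscale gamma (g xs)) <= 0) by (apply dot_nonpos; auto).
  destruct (Hf t) as [U [_ [_ [HXU [Hcvx Hgrad]]]]].
  assert (Hgr : f t xt + dot n d (vsub xs xt) <= f t xs).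
  { apply (grad_ineq n U); auto. }
  assert (Hdr := drift m (Q (S t)) (Q (S (S t))) (g xt) (g z) gamma (HQ (S t))).
  assert (Hlp : dot m (vsub (g z) (g xt)) (vsub (g z) (g xt)) <= beta ^ 2 * dot n (vsub z xt) (vsub z xt)).
  { rewrite <- !norm_sq. pose proof (Hlip z xt Hz Hxt).
    pose proof (norm_ge0 m (vsub (g z) (g xt))). nra. }
  assert (Hy := L4 n d (vsub z xt) eta Heta).
  assert (HdD : dot n d d <= D ^ 2).
  { rewrite <- norm_sq. pose proof (HdfD t xt Hxt) as Hd0; fold d in Hd0. pose proof (norm_ge0 n d). nra. }
  assert (HdD2 : dot n d d * / (2 * eta) <= D ^ 2 / (2 * eta)).
  { unfold Rdiv. apply Rmult_le_compat_r; auto. left; apply Rinv_0_lt_compat; lra. }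
  assert (Hal : 0 <= (alpha - / 2 * (gamma ^ 2 * beta ^ 2 + eta)) * dot n (vsub z xt) (vsub z xt)).
  { apply Rmult_le_pos; [lra | apply dot_ge0]. }
  assert (Hg2 : gamma ^ 2 * dot m (vsub (g z) (g xt)) (vsub (g z) (g xt)) <= gamma ^ 2 * (beta ^ 2 * dot n (vsub z xt) (vsub z xt))).
  { apply Rmult_le_compat_l; auto. apply pow2_ge_0. }
  unfold Delta, L. rewrite !norm_sq.
  unfold h in Hsc. fold w in Hdr.
  unfold Rdiv in *. nra.
Qed.
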